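(* Let $k$ be a field, $X$ a finite non-empty set, and for every $a\in X$ let $\sigma_a,\tau_a:X\to X$ be maps with each $\sigma_a$ bijective; let ${\cal A}$ be the special set-theoretic Yang–Baxter algebra of these data. Suppose $(X,+,\circ)$ is a brace and, for all $a,b\in X$, $\sigma_a(b)=-a+a\circ b$, $\sigma_{\sigma_a(b)}(\tau_b(a))=a$ and $w_aw_b=w_{a\circ b}$. Let ${\cal F}=\sum_{a\in X}h_a\otimes w_a^{-1}$ and, for an integer $n\ge2$, \[{\cal F}_{12\ldots n-1,n}:=\sum_{a_1,\ldots,a_{n-1}\in X}h_{a_1}\otimes h_{\sigma_{a_1}(a_2)}\otimes h_{\sigma_{a_1}(\sigma_{a_2}(a_3))}\otimes\cdots\otimes h_{\sigma_{a_1}(\sigma_{a_2}(\cdots\sigma_{a_{n-2}}(a_{n-1})\cdots))}\otimes w_{a_{n-1}}^{-1}w_{a_{n-2}}^{-1}\cdots w_{a_1}^{-1}\in{\cal A}^{\otimes n},\] and define recursively ${\cal F}_{12}:={\cal F}$ and ${\cal F}_{12\ldots n}:=({\cal F}_{12\ldots n-1}\otimes1_{\cal A})\,{\cal F}_{12\ldots n-1,n}$ for $n\ge3$. Then: \begin{enumerate} \item ${\cal F}_{12\ldots n-1,n}=(\Delta^{(n-1)}\otimes\mathrm{id}){\cal F}$; \item ${\cal F}_{12\ldots n}=\sum_{a_1,\ldots,a_{n-1}\in X}h_{a_1}\otimes h_{a_2}w_{a_1}^{-1}\otimes h_{a_3}w_{a_1\circ a_2}^{-1}\otimes\cdots\otimes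 h_{a_{n-1}}w^{-1}_{a_1\circ a_2\circ\cdots\circ a_{n-2}}\otimes w^{-1}_{a_1\circ a_2\circ\cdots\circ a_{n-1}}.$ \end{enumerate}
   Context: The special set-theoretic Yang–Baxter algebra ${\cal A}$ is the unital associative $k$-algebra generated by $1_{\cal A},h_a,w_a,w_a^{-1}$ ($a\in X$) subject to, for all $a,b\in X$: $h_ah_b=\delta_{a,b}h_a$, $w_a^{-1}w_a=w_aw_a^{-1}=1_{\cal A}$, $w_aw_b=w_{\sigma_a(b)}w_{\tau_b(a)}$, $w_ah_b=h_{\sigma_a(b)}w_a$, and $\sum_{a\in X}h_a=1_{\cal A}$. A brace is a set with two group operations $+$ (abelian) and $\circ$ such that $a\circ(b+c)=a\circ b-a+a\circ c$. $\Delta:{\cal A}\to{\cal A}\otimes{\cal A}$ is the algebra homomorphism with $\Delta(w_a^{\pm1})=w_a^{\pm1}\otimes w_a^{\pm1}$ and $\Delta(h_a)=\sum_{b,c\in X,\,b+c=a}h_b\otimes h_c$; $\Delta^{(m)}:{\cal A}\to{\cal A}^{\otimes m}$ denotes the iterated (coassociative) coproduct, with $\Delta^{(1)}=\mathrm{id}$ and $\Delta^{(2)}=\Delta$. *)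

(* Defs.v *)
(* Free algebras are monoid algebras over free monoids
   (multinomials' monalg: {malg k[{fmonom I}]}); quotient algebras (the
   Yang-Baxter algebra A and its tensor powers A^{(x)n}) are represented by
   their presentations: an equality in the quotient is membership of the
   difference in the two-sided ideal generated by the defining relations. *)
From HB Require Import structures.
From mathcomp Require Import all_boot all_order all_algebra.
From mathcomp Require Import monalg.

Set Implicit Arguments.
Unset Strict Implicit.
Unset Printing Implicit Defensive.

Import GRing.Theory.
Local Open Scope ring_scope.

Section FreeAlgebra.
Variable k : fieldType.

Definition FreeA (I : choiceType) := {malg k[{fmonom I}]}.

Definition gen (I : choiceType) (i : I) : FreeA I := << fmu i >>.

Definition ext (I J : choiceType) (img : I -> FreeA J) (p : FreeA I) : FreeA J :=
  mmap (fun c : k => c%:A) (fun m : {fmonom I} => \prod_(i <- (m : seq I)) img i) p.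

Definition rename (I J : choiceType) (f : I -> J) : FreeA I -> FreeA J :=
  ext (fun i => gen (f i)).

Definition ideal_gen (I : choiceType) (R : FreeA I -> Prop) (x : FreeA I) : Prop :=
  exists s : seq (FreeA I * FreeA I * FreeA I),
    (forall t, t \in s -> R t.1.2) /\
    x = \sum_(t <- s) t.1.1 * t.1.2 * t.2.
End FreeAlgebra.
Arguments gen {k I} i.
Arguments ext {k I J} img p.
Arguments rename {k I J} f _.
Arguments ideal_gen {k I} R x.

Lemma two_le_SS (m : nat) : (2 <= m.+2)%N. Proof. by []. Qed.

Section YBAlgebra.
Variable k : fieldType.
Variable X : finType.
Variables sigma tau : X -> X -> X. (* sigma a b = sigma_a(b), tau b a = tau_b(a) *)

Definition Gen := (X + X + X)%type.
Definition hgen (a : X) : Gen := inl (inl a).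
Definition wgen (a : X) : Gen := inl (inr a).
Definition wigen (a : X) : Gen := inr a.

Definition hG (a : X) : FreeA k Gen := gen (hgen a).
Definition wG (a : X) : FreeA k Gen := gen (wgen a).
Definition wiG (a : X) : FreeA k Gen := gen (wigen a).

Definition relA (r : FreeA k Gen) : Prop :=
  (exists a b, r = hG a * hG b - (a == b)%:R * hG a) \/
  (exists a, r = wiG a * wG a - 1) \/
  (exists a, r = wG a * wiG a - 1) \/
  (exists a b, r = wG a * wG b - wG (sigma a b) * wG (tau b a)) \/
  (exists a b, r = wG a * hG b - hG (sigma a b) * wG a) \/
  (r = \sum_(a : X) hG a - 1).

Definition eqYB (x y : FreeA k Gen) : Prop := ideal_gen (@relA) (x - y).

(* A^{(x)n} = free algebra on n disjoint copies of the generators, modulo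
   the relations of A in each copy and commutation of distinct copies *)
Definition TGen (n : nat) := ('I_n * Gen)%type.

(* the embedding x |-> 1 (x) .. (x) x (x) .. (x) 1 (x in slot i) *)
Definition slot (n : nat) (i : 'I_n) : FreeA k Gen -> FreeA k (TGen n) :=
  rename (fun g : Gen => (i, g)).

Definition relT (n : nat) (r : FreeA k (TGen n)) : Prop :=
  (exists (i : 'I_n) r0, relA r0 /\ r = slot i r0) \/
  (exists (i j : 'I_n) (g g' : Gen),
      i != j /\ r = gen (i, g) * gen (j, g') - gen (j, g') * gen (i, g)).

Definition eqTens (n : nat) (x y : FreeA k (TGen n)) : Prop :=
  ideal_gen (@relT n) (x - y).

Definition Fcal : FreeA k (TGen 2) :=
  \sum_(a : X) slot ord0 (hG a) * slot ord_max (wiG a).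

(* slot i of the summand of F_{12...n-1,n} indexed by s = [a_1; ...; a_{n-1}] *)
Definition slotF (s : seq X) (i : nat) : FreeA k Gen :=
  match drop i s with
  | a :: _ => hG (foldr (fun b y => sigma b y) a (take i s))
  | [::] => \prod_(a <- rev s) wiG a
  end.

Definition Fbar (n : nat) : FreeA k (TGen n) :=
  \sum_(a : (n.-1).-tuple X) \prod_(i < n) slot i (slotF a i).

Definition widenT (m : nat) : FreeA k (TGen m) -> FreeA k (TGen m.+1) :=
  rename (fun q : TGen m => (widen_ord (leqnSn m) q.1, q.2)).

Fixpoint Ffull_aux (p : nat) : FreeA k (TGen p.+2) :=
  match p return FreeA k (TGen p.+2) with
  | 0 => Fcal
  | q.+1 => widenT (Ffull_aux q) * Fbar q.+3
  end.

(* F_{12...n}, for n >= 2 (values for n < 2 are irrelevant) *)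
Definition Ffull (n : nat) : FreeA k (TGen n) :=
  match n return FreeA k (TGen n) with
  | (p.+1).+1 => Ffull_aux p
  | _ => 1
  end.

Section Brace.
Variable add : X -> X -> X.
Variable circ : X -> X -> X.

Definition deltaGen (g : Gen) : FreeA k (TGen 2) :=
  match g with
  | inl (inl a) => \sum_(bc : X * X | add bc.1 bc.2 == a)
                      slot ord0 (hG bc.1) * slot ord_max (hG bc.2)
  | inl (inr a) => slot ord0 (wG a) * slot ord_max (wG a)
  | inr a => slot ord0 (wiG a) * slot ord_max (wiG a)
  end.

Definition Delta : FreeA k Gen -> FreeA k (TGen 2) := ext deltaGen.

(* Delta (x) id^{(x) m} : A^{(x) m.+1} -> A^{(x) m.+2} *)
Definition Dslot0 (m : nat) : FreeA k (TGen m.+1) -> FreeA k (TGen m.+2) :=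
  ext (fun p : TGen m.+1 =>
    if val p.1 == 0%N then
      rename (fun q : TGen 2 => (widen_ord (two_le_SS m) q.1, q.2)) (deltaGen p.2)
    else gen (lift ord0 p.1, p.2)).

(* iterated coproduct Delta^{(m)} : A -> A^{(x) m}, Delta^{(1)} = id,
   Delta^{(m+1)} = (Delta (x) id^{(x)(m-1)}) o Delta^{(m)}; m = 0 unused *)
Fixpoint Dn_aux (p : nat) : FreeA k Gen -> FreeA k (TGen p.+1) :=
  match p return FreeA k Gen -> FreeA k (TGen p.+1) with
  | 0 => slot ord0
  | q.+1 => fun x => Dslot0 (Dn_aux q x)
  end.

Definition Dn (m : nat) : FreeA k Gen -> FreeA k (TGen m) :=
  match m return FreeA k Gen -> FreeA k (TGen m) with
  | 0 => fun _ => 0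
  | p.+1 => Dn_aux p
  end.

(* f (x) id : A (x) A -> A^{(x) n}, for f : A -> A^{(x) (n-1)} *)
Definition tensor_id (n : nat) (f : FreeA k Gen -> FreeA k (TGen n.-1)) :
    FreeA k (TGen 2) -> FreeA k (TGen n) :=
  ext (fun q : TGen 2 =>
    if val q.1 == 0%N then
      rename (fun r : TGen n.-1 => (widen_ord (leq_pred n) r.1, r.2)) (f (gen q.2))
    else if insub (n.-1) is Some i then gen (i, q.2) else 0).

(* slot i of the summand of the right-hand side of claim 2, s = [a_1;...;a_{n-1}]:
   h_{a_{i+1}} w^{-1}_{a_1 o ... o a_i}  (no h for the last slot, no w for slot 0) *)
Definition slotG (s : seq X) (i : nat) : FreeA k Gen :=
  (if drop i s is a :: _ then hG a else 1) *
  (if take i s is a :: t then wiG (foldl circ a t) else 1).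

Definition Fn_closed (n : nat) : FreeA k (TGen n) :=
  \sum_(a : (n.-1).-tuple X) \prod_(i < n) slot i (slotG a i).
End Brace.
End YBAlgebra.

(* Main.v *)
Require Import Defs.
From HB Require Import structures.
From mathcomp Require Import all_boot all_order all_algebra.
From mathcomp Require Import monalg.
Import GRing.Theory.
Local Open Scope ring_scope.
Set Implicit Arguments.
Unset Strict Implicit.
Unset Printing Implicit Defensive.

Section Free.
Variable k : fieldType.

Lemma fm_cons (I : choiceType) (i : I) (s : seq I) :
  (FMonom (i :: s) : {fmonom I}) = mmul (fmu i) (FMonom s).
Proof. by apply/val_inj; rewrite /= fmM fmU. Qed.

Lemma U_prod (I : choiceType) (m : {fmonom I}) :
  (<< m >> : FreeA k I) = \prod_(i <- (m : seq I)) gen i.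
Proof.
case: m => s; elim: s => [|i s IH] /=.
  rewrite big_nil -[FMonom _]/(FMonom [::]) -fmoneE; by [].
rewrite big_cons -IH fm_cons /gen malgM_def fgmulUU mulr1 //.
Qed.

Lemma U_scale (I : choiceType) (c : k) (m : {fmonom I}) :
  (<< c *g m >> : FreeA k I) = c *: << m >>.
Proof. by apply/malgP => m'; rewrite mcoeffZ !mcoeffU mulr_natr. Qed.

Lemma free_ind (I : choiceType) (P : FreeA k I -> Prop) :
  P 0 -> (forall x y, P x -> P y -> P (x + y)) ->
  (forall c x, P x -> P (c *: x)) ->
  P 1 -> (forall x y, P x -> P y -> P (x * y)) -> (forall i, P (gen i)) ->
  forall x, P x.
Proof.
move=> P0 PD PZ P1 PM Pg x; rewrite (monalgE x).
apply: big_ind => // m _; rewrite U_scale; apply: PZ.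
rewrite U_prod; apply: big_ind => //.
Qed.

Lemma algC_comm (I : choiceType) (c : k) (y : FreeA k I) :
  c%:A * y = y * c%:A.
Proof.
have -> : c%:A = c%:MP :> FreeA k I.
  by apply/malgP => m; rewrite mcoeffZ mcoeff1 mcoeffC mulr_natr.
rewrite mul_malgC (monalgE y) mulr_suml scaler_sumr; apply: eq_bigr => m _.
by rewrite malgM_def fgmulUU mulm1 mulrC U_scale [in RHS]U_scale scalerA.
Qed.

Section Ext.
Variables (I J : choiceType) (img : I -> FreeA k J).

Definition hprod (m : {fmonom I}) : FreeA k J := \prod_(i <- (m : seq I)) img i.

Lemma hprod_mm : mmorphism hprod.
Proof.
split; last by rewrite /hprod fm1 big_nil.
by move=> m1 m2; rewrite /hprod fmM big_cat.
Qed.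

HB.instance Definition _ := monalg.isMultiplicative.Build _ _ hprod hprod_mm.

Lemma extE : ext img = mmap (in_alg (FreeA k J)) hprod.
Proof. by []. Qed.

Lemma ext_is_additive : additive (ext img).
Proof. rewrite extE; exact: mmap_is_additive. Qed.

HB.instance Definition _ := GRing.isAdditive.Build _ _ (ext img) ext_is_additive.

Lemma ext_is_multiplicative : multiplicative (ext img).
Proof.
rewrite extE; apply: commr_mmap_is_multiplicative => g m m'.
by rewrite /GRing.comm /= algC_comm.
Qed.

HB.instance Definition _ := GRing.isMultiplicative.Build _ _ (ext img) ext_is_multiplicative.

Lemma ext_gen i : ext img (gen i) = img i.
Proof. by rewrite extE /gen mmapU /= /hprod fmU big_seq1 scale1r !mul1r. Qed.

End Ext.
End Free.

Section Free2.
Variable k : fieldType.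
Lemma extZ (I J : choiceType) (img : I -> FreeA k J) c x : ext img (c *: x) = c *: ext img x.
Proof.
have -> : c *: x = c%:MP * x by rewrite mul_malgC.
rewrite rmorphM /=.
have -> : ext img c%:MP = c%:A by rewrite extE mmapU /hprod fm1 big_nil mulr1.
by rewrite mulr_algl.
Qed.
End Free2.

Section Free3.
Variable k : fieldType.
Lemma eq_ext (I J : choiceType) (f g : I -> FreeA k J) :
  f =1 g -> ext f =1 ext g.
Proof.
move=> fg; apply: free_ind.
- by rewrite !raddf0.
- by move=> x y Hx Hy; rewrite !raddfD /= Hx Hy.
- by move=> c x Hx; rewrite !extZ Hx.
- by rewrite !rmorph1.
- by move=> x y Hx Hy; rewrite !rmorphM /= Hx Hy.
- by move=> i; rewrite !ext_gen.
Qed.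
End Free3.
Section Free3b.
Variable k : fieldType.
Variables (I J : choiceType) (f : I -> FreeA k J).
Lemma extD x y : ext f (x + y) = ext f x + ext f y.
Proof. exact: raddfD. Qed.
Lemma extB x y : ext f (x - y) = ext f x - ext f y.
Proof. exact: raddfB. Qed.
Lemma extM x y : ext f (x * y) = ext f x * ext f y.
Proof. exact: rmorphM. Qed.
Lemma ext0 : ext f 0 = 0.
Proof. exact: raddf0. Qed.
Lemma ext1 : ext f 1 = 1.
Proof. exact: rmorph1. Qed.
Lemma ext_sum (T : Type) (r : seq T) (P : pred T) (F : T -> FreeA k I) :
  ext f (\sum_(i <- r | P i) F i) = \sum_(i <- r | P i) ext f (F i).
Proof. exact: raddf_sum. Qed.
Lemma ext_prod (T : Type) (r : seq T) (P : pred T) (F : T -> FreeA k I) :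
  ext f (\prod_(i <- r | P i) F i) = \prod_(i <- r | P i) ext f (F i).
Proof. exact: rmorph_prod. Qed.
End Free3b.

Section Free4.
Variable k : fieldType.
Lemma ext_ext (I J L : choiceType) (f : I -> FreeA k J) (g : J -> FreeA k L) x :
  ext g (ext f x) = ext (fun i => ext g (f i)) x.
Proof.
elim/free_ind: x.
- by rewrite (ext0 f) !ext0.
- move=> x y Hx Hy; rewrite (extD f x y) (extD g) (extD (fun i => ext g (f i))).
  by congr (_ + _); [exact: Hx | exact: Hy].
- move=> c x Hx; rewrite (extZ f) (extZ g) (extZ (fun i => ext g (f i))).
  by congr (_ *: _); exact: Hx.
- by rewrite (ext1 f) !ext1.
- move=> x y Hx Hy; rewrite (extM f x y) (extM g) (extM (fun i => ext g (f i))).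
  by congr (_ * _); [exact: Hx | exact: Hy].
- by move=> i; rewrite (ext_gen f) (ext_gen (fun i => ext g (f i))).
Qed.

Lemma rename_gen (I J : choiceType) (f : I -> J) i :
  rename (k:=k) f (gen i) = gen (f i).
Proof. exact: ext_gen. Qed.

Section Ideal.
Variables (I : choiceType) (R : FreeA k I -> Prop).
Local Notation J := (ideal_gen R).

Lemma ideal0 : J 0.
Proof. by exists [::]; split => //; rewrite big_nil. Qed.

Lemma idealD x y : J x -> J y -> J (x + y).
Proof.
move=> [s1 [H1 ->]] [s2 [H2 ->]]; exists (s1 ++ s2); split; last by rewrite big_cat.
by move=> t; rewrite mem_cat => /orP [/H1|/H2].
Qed.

Lemma idealMl a x : J x -> J (a * x).
Proof.
move=> [s [H ->]]; exists [seq (a * t.1.1, t.1.2, t.2) | t <- s]; split.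
  by move=> t /mapP [t' /H Ht' ->].
by rewrite big_map mulr_sumr; apply: eq_bigr => t _; rewrite !mulrA.
Qed.

Lemma idealMr x a : J x -> J (x * a).
Proof.
move=> [s [H ->]]; exists [seq (t.1.1, t.1.2, t.2 * a) | t <- s]; split.
  by move=> t /mapP [t' /H Ht' ->].
by rewrite big_map mulr_suml; apply: eq_bigr => t _; rewrite !mulrA.
Qed.

Lemma idealN x : J x -> J (- x).
Proof. by move=> Hx; rewrite -mulN1r; apply: idealMl. Qed.

Lemma idealB x y : J x -> J y -> J (x - y).
Proof. by move=> Hx Hy; apply: idealD => //; apply: idealN. Qed.

Lemma idealZ c x : J x -> J (c *: x).
Proof. by move=> Hx; rewrite -mulr_algl; apply: idealMl. Qed.

Lemma ideal_in r : R r -> J r.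
Proof.
move=> Hr; exists [:: (1, r, 1)]; split; last by rewrite big_seq1 mul1r mulr1.
by move=> t; rewrite inE => /eqP ->.
Qed.

Lemma ideal_sum (T : Type) (r : seq T) (P : pred T) (F : T -> FreeA k I) :
  (forall i, P i -> J (F i)) -> J (\sum_(i <- r | P i) F i).
Proof. by move=> H; apply: big_ind => //; [exact: ideal0 | exact: idealD]. Qed.

Lemma ideal_prod (T : eqType) (r : seq T) (F : T -> FreeA k I) j :
  j \in r -> J (F j) -> J (\prod_(i <- r) F i).
Proof.
elim: r => [//|x r IH]; rewrite inE big_cons => /orP [/eqP <- Hj|Hr Hj].
  exact: idealMr.
by apply: idealMl; apply: IH.
Qed.

Definition eqI x y := J (x - y).

Lemma eqI_refl x : eqI x x.
Proof. by rewrite /eqI subrr; exact: ideal0. Qed.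

Lemma eqI_eq x y : x = y -> eqI x y.
Proof. by move=> ->; apply: eqI_refl. Qed.

Lemma eqI_sym x y : eqI x y -> eqI y x.
Proof. by move=> H; rewrite /eqI -opprB; apply: idealN. Qed.

Lemma eqI_trans x y z : eqI x y -> eqI y z -> eqI x z.
Proof.
by move=> H1 H2; rewrite /eqI -[x](subrK y) -addrA; apply: idealD.
Qed.

Lemma eqI_add x y x' y' : eqI x x' -> eqI y y' -> eqI (x + y) (x' + y').
Proof. by move=> H1 H2; rewrite /eqI opprD addrACA; apply: idealD. Qed.

Lemma eqI_mul x y x' y' : eqI x x' -> eqI y y' -> eqI (x * y) (x' * y').
Proof.
move=> H1 H2; rewrite /eqI.
have -> : x * y - x' * y' = (x - x') * y + x' * (y - y').
  by rewrite mulrBl mulrBr addrA subrK.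
by apply: idealD; [apply: idealMr | apply: idealMl].
Qed.

Lemma eqI_mull a y y' : eqI y y' -> eqI (a * y) (a * y').
Proof. by move=> H; apply: eqI_mul => //; apply: eqI_refl. Qed.

Lemma eqI_mulr a y y' : eqI y y' -> eqI (y * a) (y' * a).
Proof. by move=> H; apply: eqI_mul => //; apply: eqI_refl. Qed.

Lemma eqI_scale c x x' : eqI x x' -> eqI (c *: x) (c *: x').
Proof. by move=> H; rewrite /eqI -scalerBr; apply: idealZ. Qed.

Lemma eqI_sum (T : Type) (r : seq T) (P : pred T) (F G : T -> FreeA k I) :
  (forall i, P i -> eqI (F i) (G i)) ->
  eqI (\sum_(i <- r | P i) F i) (\sum_(i <- r | P i) G i).
Proof. by move=> H; rewrite /eqI -sumrB; apply: ideal_sum. Qed.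

Lemma eqI_prod (T : Type) (r : seq T) (F G : T -> FreeA k I) :
  (forall i, eqI (F i) (G i)) ->
  eqI (\prod_(i <- r) F i) (\prod_(i <- r) G i).
Proof.
move=> H; elim: r => [|x r IH]; first by rewrite !big_nil; apply: eqI_refl.
by rewrite !big_cons; apply: eqI_mul.
Qed.

Lemma eqI_prod0 (T : eqType) (r : seq T) (F : T -> FreeA k I) j :
  j \in r -> eqI (F j) 0 -> eqI (\prod_(i <- r) F i) 0.
Proof. by rewrite /eqI !subr0; apply: ideal_prod. Qed.

Lemma eqI_0 x y : eqI x 0 -> eqI (x * y) 0 /\ eqI (y * x) 0.
Proof. by rewrite /eqI !subr0; split; [apply: idealMr | apply: idealMl]. Qed.

Definition commI x y := eqI (x * y) (y * x).

Lemma commI_prodl (T : Type) (r : seq T) (F : T -> FreeA k I) z :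
  (forall i, commI (F i) z) -> commI (\prod_(i <- r) F i) z.
Proof.
move=> H; elim: r => [|x r IH]; first by rewrite !big_nil /commI mul1r mulr1; apply: eqI_refl.
rewrite big_cons /commI -mulrA.
apply: eqI_trans (eqI_mull _ IH) _; rewrite !mulrA; apply: eqI_mulr; exact: H.
Qed.

Lemma commI_sym x y : commI x y -> commI y x.
Proof. exact: eqI_sym. Qed.

End Ideal.

Lemma ideal_ext (I J : choiceType) (R : FreeA k I -> Prop) (R' : FreeA k J -> Prop)
  (f : I -> FreeA k J) :
  (forall r, R r -> ideal_gen R' (ext f r)) ->
  forall x, ideal_gen R x -> ideal_gen R' (ext f x).
Proof.
move=> H x [s [Hs ->]]; rewrite ext_sum big_seq; apply: ideal_sum => t ts.
by rewrite !extM; apply: idealMr; apply: idealMl; apply: H; apply: Hs.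
Qed.
End Free4.

Section Brace.
Variables (X : finZmodType) (sigma circ : X -> X -> X) (e : X).
Hypothesis Hsigma_bij : forall a : X, bijective (sigma a).
Hypothesis Hcirc_assoc : associative circ.
Hypothesis Hcirc_id : forall a : X, circ e a = a /\ circ a e = a.
Hypothesis Hbrace : forall a b c : X, circ a (b + c) = circ a b - a + circ a c.
Hypothesis Hsigma : forall a b : X, sigma a b = - a + circ a b.

Lemma circ0 a : circ a 0 = a.
Proof.
have := Hbrace a 0 0; rewrite addr0 => H.
have := congr1 (fun z => z - circ a 0) H; rewrite addrK subrr => /eqP.
by rewrite eq_sym subr_eq0 => /eqP.
Qed.

Lemma e0 : e = 0.
Proof. by have := circ0 e; rewrite (proj1 (Hcirc_id 0)). Qed.

Lemma sigma0 a : sigma a 0 = 0.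
Proof. by rewrite Hsigma circ0 addNr. Qed.

Lemma sigmaD a b c : sigma a (b + c) = sigma a b + sigma a c.
Proof.
rewrite !Hsigma Hbrace.
by rewrite !addrA.
Qed.

Lemma sigmaN a b : sigma a (- b) = - sigma a b.
Proof.
apply/eqP; rewrite -subr_eq0 opprK -sigmaD addrC subrr; apply/eqP.
exact: sigma0.
Qed.

Lemma sigma_e b : sigma e b = b.
Proof. by rewrite Hsigma (proj1 (Hcirc_id b)) e0 oppr0 add0r. Qed.

Lemma sigma_circ a b c : sigma (circ a b) c = sigma a (sigma b c).
Proof.
rewrite [sigma b c]Hsigma sigmaD sigmaN !Hsigma Hcirc_assoc.
by rewrite opprD opprK [a - _]addrC -addrA addNKr.
Qed.

Lemma sigma_sum a (s : seq X) : sigma a (\sum_(x <- s) x) = \sum_(x <- s) sigma a x.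
Proof.
elim: s => [|x s IH]; first by rewrite !big_nil sigma0.
by rewrite !big_cons sigmaD IH.
Qed.

Definition Lam (s : seq X) : seq X := foldr (fun x t => x :: map (sigma x) t) [::] s.
Definition pc (s : seq X) : X := foldr circ e s.

Lemma size_Lam s : size (Lam s) = size s.
Proof. by elim: s => //= x s IH; rewrite size_map IH. Qed.

Lemma sum_Lam s : \sum_(x <- Lam s) x = pc s.
Proof.
elim: s => [|x s IH] /=; first by rewrite big_nil e0.
rewrite big_cons big_map -sigma_sum IH Hsigma addrA subrr add0r //.
Qed.

Lemma Lam_inj : injective Lam.
Proof.
elim=> [|x s IH] [|y t] //=; move=> [<-] /(inj_map (bij_inj (Hsigma_bij x))).
by move/IH ->.
Qed.

Lemma foldl_pc a u : foldl circ a u = circ a (pc u).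
Proof.
elim: u a => [|x u IH] a /=; first by rewrite (proj2 (Hcirc_id a)).
by rewrite IH Hcirc_assoc.
Qed.

Lemma foldr_sigma y u : foldr (fun b z => sigma b z) y u = sigma (pc u) y.
Proof.
elim: u => [|x u IH] /=; first by rewrite sigma_e.
by rewrite IH sigma_circ.
Qed.

Lemma nth_Lam s i : (i < size s)%N ->
  nth 0 (Lam s) i = foldr (fun b y => sigma b y) (nth 0 s i) (take i s).
Proof.
elim: s i => [|x s IH] [|i] //= Hi.
by rewrite (nth_map 0) ?size_Lam // IH.
Qed.

Lemma pc_cat s t : pc (s ++ t) = circ (pc s) (pc t).
Proof.
elim: s => [|x s IH] /=; first by rewrite (proj1 (Hcirc_id _)).
by rewrite IH Hcirc_assoc.
Qed.

End Brace.

Record cong (T : nzRingType) (E : T -> T -> Prop) : Prop := Cong {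
  crefl_ : forall x, E x x;
  csym_ : forall x y, E x y -> E y x;
  ctrans_ : forall x y z, E x y -> E y z -> E x z;
  cadd_ : forall x x' y y', E x x' -> E y y' -> E (x + y) (x' + y');
  cmul_ : forall x x' y y', E x x' -> E y y' -> E (x * y) (x' * y')
}.

Section Cong.
Variables (T : nzRingType) (E : T -> T -> Prop) (HE : cong E).
Lemma crefl x : E x x. Proof. by case: HE => *; auto. Qed.
Lemma csym x y : E x y -> E y x. Proof. by case: HE => *; auto. Qed.
Lemma ctrans x y z : E x y -> E y z -> E x z. Proof. by case: HE => _ _ H _ _; apply: H. Qed.
Lemma cadd x x' y y' : E x x' -> E y y' -> E (x + y) (x' + y'). Proof. by case: HE => _ _ _ H _; apply: H. Qed.
Lemma cmul x x' y y' : E x x' -> E y y' -> E (x * y) (x' * y'). Proof. by case: HE => _ _ _ _ H; apply: H. Qed.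

Lemma ceq x y : x = y -> E x y.
Proof. by move=> ->; apply: crefl. Qed.

Lemma cmull a x y : E x y -> E (a * x) (a * y).
Proof. by move=> H; apply: cmul => //; apply: crefl. Qed.

Lemma cmulr a x y : E x y -> E (x * a) (y * a).
Proof. by move=> H; apply: cmul => //; apply: crefl. Qed.

Lemma csum (I : Type) (r : seq I) (P : pred I) (F G : I -> T) :
  (forall i, P i -> E (F i) (G i)) ->
  E (\sum_(i <- r | P i) F i) (\sum_(i <- r | P i) G i).
Proof.
move=> H; elim: r => [|x r IH]; first by rewrite !big_nil; apply: crefl.
rewrite !big_cons; case: (boolP (P x)) => Px //.
by apply: cadd => //; apply: H.
Qed.

Lemma csum_seq (I : eqType) (r : seq I) (F G : I -> T) :
  (forall i, i \in r -> E (F i) (G i)) ->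
  E (\sum_(i <- r) F i) (\sum_(i <- r) G i).
Proof. by move=> H; rewrite big_seq [in X in E _ X]big_seq; apply: csum. Qed.

Lemma cprod (I : Type) (r : seq I) (F G : I -> T) :
  (forall i, E (F i) (G i)) ->
  E (\prod_(i <- r) F i) (\prod_(i <- r) G i).
Proof.
move=> H; elim: r => [|x r IH]; first by rewrite !big_nil; apply: crefl.
by rewrite !big_cons; apply: cmul.
Qed.

Lemma cprod_seq (I : eqType) (r : seq I) (F G : I -> T) :
  (forall i, i \in r -> E (F i) (G i)) ->
  E (\prod_(i <- r) F i) (\prod_(i <- r) G i).
Proof.
elim: r => [|x r IH] H; first by rewrite !big_nil; apply: crefl.
rewrite !big_cons; apply: cmul; first by apply: H; rewrite inE eqxx.
by apply: IH => i ir; apply: H; rewrite inE ir orbT.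
Qed.

Lemma czero_l x y : E x 0 -> E (x * y) 0.
Proof. by move=> H; rewrite -(mul0r y); apply: cmulr. Qed.

Lemma czero_r x y : E x 0 -> E (y * x) 0.
Proof. by move=> H; rewrite -(mulr0 y); apply: cmull. Qed.

Lemma cprod0 (I : eqType) (r : seq I) (F : I -> T) j :
  j \in r -> E (F j) 0 -> E (\prod_(i <- r) F i) 0.
Proof.
elim: r => [//|x r IH]; rewrite inE big_cons => /orP [/eqP <- Hj|Hr Hj].
  exact: czero_l.
by apply: czero_r; apply: IH.
Qed.

Lemma csum0 (I : Type) (r : seq I) (P : pred I) (F : I -> T) :
  (forall i, P i -> E (F i) 0) -> E (\sum_(i <- r | P i) F i) 0.
Proof.
move=> H; apply: ctrans (_ : E _ (\sum_(i <- r | P i) (0 : T))) _ => //.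
  by apply: csum.
by rewrite big1 //; apply: crefl.
Qed.

Definition commE x y := E (x * y) (y * x).

Lemma commE_prodl (I : eqType) (r : seq I) (F : I -> T) z :
  (forall i, i \in r -> commE (F i) z) -> commE (\prod_(i <- r) F i) z.
Proof.
rewrite /commE; elim: r => [|x r IH] H.
  by rewrite !big_nil mul1r mulr1; apply: crefl.
rewrite big_cons -mulrA.
apply: ctrans (cmull _ (IH _)) _ => [i ir|]; first by apply: H; rewrite inE ir orbT.
rewrite !mulrA; apply: cmulr; apply: H; by rewrite inE eqxx.
Qed.

Lemma cprod_merge (I : eqType) (r : seq I) (F G : I -> T) :
  uniq r -> (forall i j, i \in r -> j \in r -> i != j -> commE (F i) (G j)) ->
  E (\prod_(i <- r) F i * \prod_(i <- r) G i) (\prod_(i <- r) (F i * G i)).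
Proof.
elim: r => [|x r IH] /=; first by rewrite !big_nil mul1r; move=> *; apply: crefl.
move=> /andP [xr ur] H; rewrite !big_cons.
have Hc : commE (\prod_(i <- r) F i) (G x).
  apply: commE_prodl => i ir; apply: H; rewrite ?inE ?ir ?eqxx ?orbT //.
  by apply/eqP => eix; move: xr; rewrite -eix ir.
rewrite -!mulrA; apply: cmull.
apply: ctrans (_ : E _ (G x * (\prod_(i <- r) F i * \prod_(i <- r) G i))) _.
  by rewrite !mulrA; apply: cmulr.
apply: cmull; apply: IH => // i j ir jr ij; apply: H => //; rewrite inE ?ir ?jr orbT //.
Qed.

Lemma gen_conj (W Wi Hb Hs : T) :
  E (W * Wi) 1 -> E (Wi * W) 1 -> E (W * Hb) (Hs * W) -> E (Wi * Hs) (Hb * Wi).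
Proof.
move=> H1 H2 H3.
apply: ctrans (_ : E _ (Wi * Hs * (W * Wi))) _.
  by rewrite -{1}[Wi * Hs]mulr1; apply: cmull; apply: csym.
rewrite mulrA -(mulrA Wi Hs W).
apply: ctrans (_ : E _ (Wi * (W * Hb) * Wi)) _.
  by apply: cmulr; apply: cmull; apply: csym.
rewrite (mulrA Wi W Hb).
apply: ctrans (_ : E _ (1 * Hb * Wi)) _; last by rewrite mul1r; apply: crefl.
by apply: cmulr; apply: cmulr.
Qed.

Lemma gen_invprod (Wa Wb Wab Wia Wib Wiab : T) :
  E (Wa * Wb) Wab -> E (Wa * Wia) 1 -> E (Wb * Wib) 1 -> E (Wiab * Wab) 1 ->
  E (Wib * Wia) Wiab.
Proof.
move=> H1 H2 H3 H4.
apply: ctrans (_ : E _ (Wiab * (Wa * Wb) * (Wib * Wia))) _.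
  rewrite -{1}[Wib * Wia]mul1r; apply: cmulr; apply: csym.
  by apply: ctrans H4; apply: cmull.
rewrite -mulrA.
apply: ctrans (_ : E _ (Wiab * 1)) _; last by rewrite mulr1; apply: crefl.
apply: cmull; rewrite -mulrA (mulrA Wb Wib Wia).
apply: ctrans (_ : E _ (Wa * (1 * Wia))) _.
  by apply: cmull; apply: cmulr.
by rewrite mul1r.
Qed.

Lemma gen_unit (W Wi : T) : E (Wi * Wi) Wi -> E (Wi * W) 1 -> E Wi 1.
Proof.
move=> H1 H2.
apply: ctrans (_ : E _ (Wi * (Wi * W))) _.
  by rewrite -{1}[Wi]mulr1; apply: cmull; apply: csym.
rewrite mulrA; apply: ctrans (_ : E _ (Wi * W)) _ => //.
by apply: cmulr.
Qed.

Lemma commE_sym x y : commE x y -> commE y x.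
Proof. exact: csym. Qed.

Lemma commE0 z : commE 0 z.
Proof. by rewrite /commE mul0r mulr0; apply: crefl. Qed.

Lemma commE1 z : commE 1 z.
Proof. by rewrite /commE mul1r mulr1; apply: crefl. Qed.

Lemma commE_add x y z : commE x z -> commE y z -> commE (x + y) z.
Proof. by rewrite /commE mulrDl mulrDr; apply: cadd. Qed.

Lemma commE_mul x y z : commE x z -> commE y z -> commE (x * y) z.
Proof.
rewrite /commE => H1 H2; rewrite -mulrA.
apply: ctrans (cmull _ H2) _; rewrite !mulrA; exact: cmulr.
Qed.

End Cong.

Lemma cong_eqI (k : fieldType) (I : choiceType) (R : FreeA k I -> Prop) : cong (eqI R).
Proof.
split; [exact: eqI_refl | exact: eqI_sym | exact: eqI_trans | |].
  by move=> x x' y y' H1 H2; apply: eqI_add.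
by move=> x x' y y' H1 H2; apply: eqI_mul.
Qed.

Section Slots.
Variables (k : fieldType) (X : finType) (sigma tau : X -> X -> X).
Local Notation RA := (@relA k X sigma tau).
Local Notation RT n := (@relT k X sigma tau n).

Lemma slotE n (i : 'I_n) (x : FreeA k (Gen X)) : slot i x = ext (fun g : Gen X => gen (i, g)) x.
Proof. by []. Qed.

Lemma slot_eqA n (i : 'I_n) (x y : FreeA k (Gen X)) : eqI RA x y -> eqI (RT n) (slot i x) (slot i y).
Proof.
rewrite /eqI => H; rewrite !slotE -extB; apply: ideal_ext H => r Hr.
by apply: ideal_in; left; exists i, r.
Qed.

Lemma slot_gen n (i : 'I_n) (g : Gen X) : slot i (gen g : FreeA k (Gen X)) = gen (i, g).
Proof. by rewrite slotE ext_gen. Qed.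

Lemma slot_comm_gen n (i j : 'I_n) (g : Gen X) (x : FreeA k (Gen X)) : i != j ->
  commE (eqI (RT n)) (slot i x) (gen (j, g)).
Proof.
move=> ij; have HC := cong_eqI (RT n).
rewrite slotE; elim/free_ind: x.
- rewrite ext0; exact: (commE0 HC).
- move=> x y Hx Hy; rewrite extD; exact: (commE_add HC Hx Hy).
- move=> c x Hx; rewrite extZ -mulr_algl.
  have H1 : commE (eqI (RT n)) (c%:A) (gen (j, g)).
    exact: (ceq HC (algC_comm _ _)).
  exact: (commE_mul HC H1 Hx).
- rewrite ext1; exact: (commE1 HC).
- move=> x y Hx Hy; rewrite extM; exact: (commE_mul HC Hx Hy).
- move=> g'; rewrite ext_gen; apply: ideal_in; right.
  by exists i, j, g', g.
Qed.

Lemma slot_comm n (i j : 'I_n) (x y : FreeA k (Gen X)) : i != j ->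
  commE (eqI (RT n)) (slot i x) (slot j y).
Proof.
move=> ij; have HC := cong_eqI (RT n).
rewrite [slot j y]slotE; elim/free_ind: y.
- rewrite ext0; exact: (commE_sym HC (commE0 HC _)).
- move=> x' y Hx Hy; rewrite extD.
  exact: (commE_sym HC (commE_add HC (commE_sym HC Hx) (commE_sym HC Hy))).
- move=> c y Hy; rewrite extZ -mulr_algl.
  have H1 : commE (eqI (RT n)) (c%:A) (slot i x).
    exact: (ceq HC (algC_comm _ _)).
  exact: (commE_sym HC (commE_mul HC H1 (commE_sym HC Hy))).
- rewrite ext1; exact: (commE_sym HC (commE1 HC _)).
- move=> x' y Hx Hy; rewrite extM.
  exact: (commE_sym HC (commE_mul HC (commE_sym HC Hx) (commE_sym HC Hy))).
- move=> g'; rewrite ext_gen; exact: slot_comm_gen.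
Qed.

End Slots.

Section ALevel.
Variables (X : finZmodType) (sigma circ : X -> X -> X) (e : X).
Hypothesis Hsigma_bij : forall a : X, bijective (sigma a).
Hypothesis Hcirc_assoc : associative circ.
Hypothesis Hcirc_id : forall a : X, circ e a = a /\ circ a e = a.
Hypothesis Hbrace : forall a b c : X, circ a (b + c) = circ a b - a + circ a c.
Hypothesis Hsigma : forall a b : X, sigma a b = - a + circ a b.

Variables (A : nzRingType) (EA : A -> A -> Prop) (HA : cong EA) (h wi : X -> A).
Hypothesis Ahh : forall a b, EA (h a * h b) ((a == b)%:R * h a).
Hypothesis Awih : forall a b, EA (wi a * h (sigma a b)) (h b * wi a).
Hypothesis Awiwi : forall a b, EA (wi b * wi a) (wi (circ a b)).
Hypothesis Awie : EA (wi e) 1.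

Local Notation pc := (pc circ e).

Definition sF (s : seq X) (i : nat) : A :=
  match drop i s with
  | a :: _ => h (foldr (fun b y => sigma b y) a (take i s))
  | [::] => \prod_(a <- rev s) wi a
  end.

Definition sG (s : seq X) (i : nat) : A :=
  (if drop i s is a :: _ then h a else 1) *
  (if take i s is a :: t then wi (foldl circ a t) else 1).

Lemma prod_rev_wi s : EA (\prod_(a <- rev s) wi a) (wi (pc s)).
Proof.
elim: s => [|x s IH]; first by rewrite big_nil; apply: (csym HA) => //.
rewrite rev_cons -cats1 big_cat big_seq1 /=.
apply: (ctrans HA) _ (Awiwi _ _); exact: (cmulr HA _ IH).
Qed.

Lemma Wpart u : EA (if u is a :: t then wi (foldl circ a t) else 1) (wi (pc u)).
Proof.
case: u => [|a t] /=; first by apply: (csym HA).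
by rewrite (foldl_pc Hcirc_assoc Hcirc_id); apply: (crefl HA).
Qed.

Lemma sF_lt s i : (i < size s)%N -> sF s i = h (sigma (pc (take i s)) (nth 0 s i)).
Proof.
move=> Hi; rewrite /sF (drop_nth 0 Hi).
by rewrite (foldr_sigma Hcirc_assoc Hcirc_id Hbrace Hsigma).
Qed.

Lemma sF_size s : EA (sF s (size s)) (wi (pc s)).
Proof. by rewrite /sF drop_size; apply: prod_rev_wi. Qed.

Lemma sG_lt s i : (i < size s)%N -> EA (sG s i) (h (nth 0 s i) * wi (pc (take i s))).
Proof. by move=> Hi; rewrite /sG (drop_nth 0 Hi); apply: (cmull HA); apply: Wpart. Qed.

Lemma sG_size s : EA (sG s (size s)) (wi (pc s)).
Proof. by rewrite /sG drop_size take_size mul1r; apply: Wpart. Qed.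

Lemma slot_key t s i : (i < size s)%N -> (i <= size t)%N -> take i t = take i s ->
  EA (sG t i * sF s i)
     ((if (i < size t)%N then (nth 0 t i == nth 0 s i)%:R else 1) * sG s i).
Proof.
move=> Hs Ht Htake; rewrite (sF_lt Hs).
set P := pc (take i s).
have HW : EA (if take i t is a :: u then wi (foldl circ a u) else 1) (wi P).
  by rewrite /P -Htake; apply: Wpart.
have Hcore : EA ((if take i t is a :: u then wi (foldl circ a u) else 1) *
                 h (sigma P (nth 0 s i))) (h (nth 0 s i) * wi P).
  apply: (ctrans HA) _ (Awih _ _); exact: (cmulr HA _ HW).
rewrite /sG; case: ltnP => Hit.
- rewrite (drop_nth 0 Hit) -mulrA.
  apply: (ctrans HA) (cmull HA _ Hcore) _.
  apply: (ctrans HA) (_ : EA _ ((nth 0 t i == nth 0 s i)%:R * (h (nth 0 s i) * wi P))) _.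
    rewrite !mulrA; apply: (cmulr HA).
    apply: (ctrans HA) (Ahh _ _) _.
    case: eqP => [->|_]; first exact: (crefl HA).
    rewrite /= mulr0n !mul0r; exact: (crefl HA).
  by apply: (cmull HA); apply: (csym HA); apply: sG_lt.
- rewrite drop_oversize // mul1r.
  apply: (ctrans HA) Hcore _; rewrite mul1r.
  by apply: (csym HA); apply: sG_lt.
Qed.


Lemma first_diff (t u : seq X) : size t = size u -> t != u ->
  exists j, [/\ (j < size t)%N, take j t = take j u & nth 0 t j != nth 0 u j].
Proof.
elim: t u => [|x t IH] [|y u] //= [Hs]; rewrite eqseq_cons.
case: (eqVneq x y) => [<-|xy] /= Htu.
  have [j [Hj Htk Hn]] := IH u Hs Htu.
  by exists j.+1; split => //=; rewrite Htk.
by exists 0%N; split.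
Qed.

Section TLevel.
Variables (T : nzRingType) (E : T -> T -> Prop) (HE : cong E).
Section Slots1.
Variables (N : nat) (S : 'I_N -> A -> T).
Hypothesis SE : forall i x y, EA x y -> E (S i x) (S i y).
Hypothesis Smul : forall i x y, S i (x * y) = S i x * S i y.
Hypothesis S0 : forall i, S i 0 = 0.
Hypothesis Scomm : forall i j x y, i != j -> commE E (S i x) (S j y).

Lemma merge_ord (m : nat) (f : 'I_m -> 'I_N) (F G : 'I_m -> A) : injective f ->
  E (\prod_(i < m) S (f i) (F i) * \prod_(i < m) S (f i) (G i))
    (\prod_(i < m) S (f i) (F i * G i)).
Proof.
move=> finj.
apply: (ctrans HE) (_ : E _ (\prod_(i < m) (S (f i) (F i) * S (f i) (G i)))) _.
  apply: (cprod_merge HE); first exact: index_enum_uniq.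
  move=> i j _ _ ij; apply: Scomm.
  by apply: contra ij => /eqP /finj ->.
by apply: (ceq HE); apply: eq_bigr => i _; rewrite Smul.
Qed.

End Slots1.

Section Claim2.
Variables (m : nat) (S : 'I_m.+2 -> A -> T).
Hypothesis SE : forall i x y, EA x y -> E (S i x) (S i y).
Hypothesis Smul : forall i x y, S i (x * y) = S i x * S i y.
Hypothesis S0 : forall i, S i 0 = 0.
Hypothesis Scomm : forall i j x y, i != j -> commE E (S i x) (S j y).

Local Notation w := (widen_ord (leqnSn m.+1)).

Lemma claim2_pick (u : m.+1.-tuple X) :
  E (\sum_(t : m.-tuple X) \prod_(i < m.+1) S (w i) (sG t i * sF u i))
    (\prod_(i < m.+1) S (w i) (sG u i)).
Proof.
have Hu : size u = m.+1 := size_tuple u.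
have Ht0 : size (take m u) == m by rewrite size_take Hu ltnSn.
pose t0 : m.-tuple X := Tuple Ht0.
rewrite (bigD1 t0) //=.
rewrite -[X in E _ X]addr0; apply: (cadd HE).
  apply: (cprod HE) => i; apply: SE.
  have Hi : (i < size u)%N by rewrite Hu.
  have Hi' : (i <= size t0)%N by rewrite size_tuple -ltnS.
  have Htk : take i t0 = take i u by rewrite /= take_takel // -ltnS.
  apply: (ctrans HA) (slot_key Hi Hi' Htk) _.
  rewrite size_tuple; case: ltnP => Him; last by rewrite mul1r; apply: (crefl HA).
  by rewrite /= nth_take // eqxx mul1r; apply: (crefl HA).
apply: (csum0 HE) => t tt0.
have Hsz : size t = size t0 by rewrite !size_tuple.
have [j [Hj Htk Hn]] := first_diff Hsz tt0.
have Hjm : (j < m.+1)%N by rewrite (leq_trans Hj) // size_tuple.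
apply: (cprod0 HE (mem_index_enum (Ordinal Hjm))) => /=.
rewrite -(S0 (w (Ordinal Hjm))); apply: SE => /=.
have Hi : (j < size u)%N by rewrite Hu.
have Hi' : (j <= size t)%N by rewrite ltnW.
have Htk' : take j t = take j u by rewrite Htk /= take_takel // ltnW // -(size_tuple t).
apply: (ctrans HA) (slot_key Hi Hi' Htk') _.
rewrite Hj.
have -> : (nth 0 t j == nth 0 u j) = false.
  apply/negbTE; move: Hn; rewrite /= nth_take //; rewrite -(size_tuple t) //.
by rewrite /= mulr0n mul0r; apply: (crefl HA).
Qed.

Lemma claim2_abs :
  E ((\sum_(t : m.-tuple X) \prod_(i < m.+1) S (w i) (sG t i)) *
     (\sum_(u : m.+1.-tuple X) \prod_(i < m.+2) S i (sF u i)))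
    (\sum_(u : m.+1.-tuple X) \prod_(i < m.+2) S i (sG u i)).
Proof.
rewrite mulr_suml.
rewrite (eq_bigr (fun t : m.-tuple X => \sum_(u : m.+1.-tuple X)
   (\prod_(i < m.+1) S (w i) (sG t i)) * \prod_(i < m.+2) S i (sF u i)));
  last by move=> t _; rewrite mulr_sumr.
rewrite exchange_big /=.
apply: (csum HE) => u _.
rewrite big_ord_recr [in X in E _ X]big_ord_recr /=.
under eq_bigr => t _ do rewrite mulrA.
rewrite -mulr_suml; apply: (cmul HE).
  apply: (ctrans HE) _ (claim2_pick u).
  apply: (csum HE) => t _.
  have winj : injective w by move=> i j /(congr1 val) /= /val_inj.
  exact: (merge_ord Smul Scomm (fun i => sG t i) (fun i : 'I_m.+1 => sF u i) winj).
apply: SE => /=.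
have H1 := sF_size u; have H2 := sG_size u; rewrite size_tuple in H1 H2.
apply: (ctrans HA) H1 _; exact: (csym HA).
Qed.

End Claim2.
Section Claim1.
Variables (m : nat) (S : 'I_m.+1 -> A -> T).
Hypothesis SE : forall i x y, EA x y -> E (S i x) (S i y).

Definition Kt (t : seq X) : T :=
  (\prod_(i < m) S (widen_ord (leqnSn m) i) (h (nth 0 t i))) *
  S ord_max (wi (\sum_(x <- t) x)).

Lemma claim1_abs :
  E (\sum_(s : m.-tuple X) \prod_(i < m.+1) S i (sF s i))
    (\sum_(t : m.-tuple X) Kt t).
Proof.
have LTP (s : m.-tuple X) : size (Lam sigma s) == m by rewrite size_Lam size_tuple.
pose LT (s : m.-tuple X) : m.-tuple X := Tuple (LTP s).
have LTinj : injective LT.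
  by move=> s1 s2 /(congr1 val) /= /(Lam_inj Hsigma_bij) /val_inj.
rewrite [X in E _ X](reindex_inj LTinj) /=.
apply: (csum HE) => s _; rewrite big_ord_recr /Kt /=.
apply: (cmul HE).
  apply: (ceq HE); apply: eq_bigr => i _ /=.
  have Hi : (i < size s)%N by rewrite size_tuple.
  rewrite (sF_lt Hi) (nth_Lam _ Hi).
  by rewrite (foldr_sigma Hcirc_assoc Hcirc_id Hbrace Hsigma).
apply: SE; rewrite (sum_Lam Hcirc_id Hbrace Hsigma).
by have := sF_size s; rewrite size_tuple.
Qed.

End Claim1.

End TLevel.

End ALevel.

Section Tup.
Variables (X : finType) (V : nmodType).

Lemma tsumS n (F : n.+1.-tuple X -> V) :
  \sum_(t : n.+1.-tuple X) F t = \sum_(x : X) \sum_(t : n.-tuple X) F [tuple of x :: t].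
Proof.
rewrite pair_big /=.
rewrite (reindex (fun p : X * n.-tuple X => [tuple of p.1 :: p.2])) //=.
exists (fun t : n.+1.-tuple X => (thead t, [tuple of behead t])) => [[x t]|t] _ /=.
  by congr (_, _); apply: val_inj.
by rewrite [RHS]tuple_eta.
Qed.

Lemma tsum0 (F : 0.-tuple X -> V) : \sum_(t : 0.-tuple X) F t = F [tuple].
Proof.
rewrite (big_pred1 [tuple]) // => t /=.
by rewrite [t]tuple0; apply/esym/eqP.
Qed.

Lemma tsum1 (F : 1.-tuple X -> V) : \sum_(t : 1.-tuple X) F t = \sum_(x : X) F [tuple x].
Proof. rewrite tsumS; apply: eq_bigr => x _; rewrite tsum0; congr F; exact: val_inj. Qed.
End Tup.

Section Base2.
Variables (X : finZmodType) (circ : X -> X -> X) (A T : nzRingType) (h wi : X -> A)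
  (S : 'I_2 -> A -> T).

Lemma base2_abs :
  \sum_(a : X) S ord0 (h a) * S ord_max (wi a) =
  \sum_(t : 1.-tuple X) \prod_(i < 2) S i (sG circ h wi t i).
Proof.
rewrite tsum1; apply: eq_bigr => x _.
rewrite big_ord_recl big_ord1 /sG /= mulr1 mul1r.
congr (_ * _); congr S; exact: val_inj.
Qed.
End Base2.

Section DnAbs.
Variables (X : finZmodType) (T : nzRingType).

Lemma dn_base_abs (g : 'I_1 -> X -> T) a :
  g ord0 a = \sum_(t : 1.-tuple X | \sum_(x <- t) x == a) \prod_(i < 1) g i (nth 0 t i).
Proof.
have Hs : forall x : X, \sum_(y <- [tuple x]) y = x.
  by move=> x; rewrite /= big_cons big_nil addr0.
rewrite big_mkcond tsum1.
rewrite (eq_bigr (fun x => if x == a then g ord0 x else 0)) => [|x _]; last first.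
  by rewrite Hs big_ord1.
by rewrite -big_mkcond big_pred1_eq.
Qed.

Lemma fiber_sum (F : X -> X * X -> T) :
  \sum_(x : X) \sum_(bc : X * X | bc.1 + bc.2 == x) F x bc =
  \sum_(bc : X * X) F (bc.1 + bc.2) bc.
Proof.
rewrite (eq_bigr (fun x => \sum_(bc : X * X) if bc.1 + bc.2 == x then F x bc else 0));
  last by move=> x _; rewrite big_mkcond.
rewrite exchange_big; apply: eq_bigr => bc _.
rewrite (bigD1 (bc.1 + bc.2)) //= eqxx big1 ?addr0 // => x xbc.
by rewrite eq_sym (negbTE xbc).
Qed.

Lemma dn_step_abs p (g : 'I_p.+2 -> X -> T) a :
  \sum_(t : p.+1.-tuple X | \sum_(x <- t) x == a)
    ((\sum_(bc : X * X | bc.1 + bc.2 == nth 0 t 0) g ord0 bc.1 * g (lift ord0 ord0) bc.2) *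
     \prod_(i < p) g (lift ord0 (lift ord0 i)) (nth 0 t (lift ord0 i)))
  = \sum_(u : p.+2.-tuple X | \sum_(x <- u) x == a) \prod_(i < p.+2) g i (nth 0 u i).
Proof.
rewrite big_mkcond tsumS [RHS]big_mkcond tsumS.
pose P (t : seq X) := \prod_(i < p) g (lift ord0 (lift ord0 i)) (nth 0 t i).
transitivity (\sum_(x : X) \sum_(t : p.-tuple X) \sum_(bc : X * X | bc.1 + bc.2 == x)
   (if bc.1 + (bc.2 + \sum_(y <- t) y) == a then g ord0 bc.1 * (g (lift ord0 ord0) bc.2 * P t) else 0)).
  apply: eq_bigr => x _; apply: eq_bigr => t _ /=.
  rewrite big_cons; case: ifP => Ha.
    rewrite mulr_suml; apply: eq_bigr => bc /eqP Hbc.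
    by rewrite addrA Hbc Ha mulrA.
  by rewrite big1 // => bc /eqP Hbc; rewrite addrA Hbc Ha.
rewrite (eq_bigr (fun x => \sum_(bc : X * X | bc.1 + bc.2 == x) \sum_(t : p.-tuple X)
   (if bc.1 + (bc.2 + \sum_(y <- t) y) == a then g ord0 bc.1 * (g (lift ord0 ord0) bc.2 * P t) else 0))); last first.
  by move=> x _; rewrite exchange_big.
rewrite (fiber_sum (fun x bc => \sum_(t : p.-tuple X)
   (if bc.1 + (bc.2 + \sum_(y <- t) y) == a then g ord0 bc.1 * (g (lift ord0 ord0) bc.2 * P t) else 0))).
under [RHS]eq_bigr => b _ do rewrite tsumS.
rewrite [RHS]pair_bigA /=; apply: eq_bigr => [[b c]] _ /=; apply: eq_bigr => t _.
rewrite !big_cons; case: ifP => // _.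
by rewrite big_ord_recl big_ord_recl.
Qed.
End DnAbs.

Section Fiber.
Variables (X : finZmodType) (T : nzRingType).
Lemma fiber_tsum m (F : m.-tuple X -> T) (G : X -> T) :
  \sum_(a : X) (\sum_(t : m.-tuple X | \sum_(x <- t) x == a) F t) * G a =
  \sum_(t : m.-tuple X) F t * G (\sum_(x <- t) x).
Proof.
rewrite (eq_bigr (fun a => \sum_(t : m.-tuple X)
   (if \sum_(x <- t) x == a then F t * G (\sum_(x <- t) x) else 0))); last first.
  move=> a _; rewrite mulr_suml big_mkcond; apply: eq_bigr => t _.
  by case: eqP => [->|_]; rewrite ?mul0r.
rewrite exchange_big; apply: eq_bigr => t _.
by rewrite -big_mkcond (big_pred1 (\sum_(x <- t) x)) // => a /=; rewrite eq_sym.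
Qed.
End Fiber.

Lemma ext_commut (k : fieldType) (I J : choiceType) (F : I -> FreeA k J) a b :
  ext F (gen a * gen b - gen b * gen a) = F a * F b - F b * F a.
Proof.
rewrite extB; congr (_ - _); rewrite extM; congr (_ * _); exact: ext_gen.
Qed.

Section YB.
Variables (k : fieldType) (X : finZmodType) (sigma tau circ : X -> X -> X) (e : X).
Hypothesis Hsigma_bij : forall a : X, bijective (sigma a).
Hypothesis Hcirc_assoc : associative circ.
Hypothesis Hcirc_id : forall a : X, circ e a = a /\ circ a e = a.
Hypothesis Hbrace : forall a b c : X, circ a (b + c) = circ a b - a + circ a c.
Hypothesis Hsigma : forall a b : X, sigma a b = - a + circ a b.
Hypothesis Hw : forall a b : X, eqYB sigma tau (wG k a * wG k b) (wG k (circ a b)).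

Local Notation RA := (@relA k X sigma tau).
Local Notation eqA := (eqI RA).
Local Notation RT n := (@relT k X sigma tau n).
Local Notation h := (@hG k X).
Local Notation w := (@wG k X).
Local Notation wi := (@wiG k X).

Let HA := cong_eqI RA.

Lemma A_hh a b : eqA (h a * h b) ((a == b)%:R * h a).
Proof. by apply: ideal_in; left; exists a, b. Qed.

Lemma A_wiw a : eqA (wi a * w a) 1.
Proof. by apply: ideal_in; right; left; exists a. Qed.

Lemma A_wwi a : eqA (w a * wi a) 1.
Proof. by apply: ideal_in; right; right; left; exists a. Qed.

Lemma A_wh a b : eqA (w a * h b) (h (sigma a b) * w a).
Proof. by apply: ideal_in; do 4 right; left; exists a, b. Qed.

Lemma A_wih a b : eqA (wi a * h (sigma a b)) (h b * wi a).
Proof. exact: (gen_conj HA (A_wwi a) (A_wiw a) (A_wh a b)). Qed.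

Lemma A_wiwi a b : eqA (wi b * wi a) (wi (circ a b)).
Proof. exact: (gen_invprod HA (Hw a b) (A_wwi a) (A_wwi b) (A_wiw _)). Qed.

Lemma A_wie : eqA (wi e) 1.
Proof.
apply: (gen_unit HA (W := w e)); last exact: A_wiw.
by have := A_wiwi e e; rewrite (proj1 (Hcirc_id e)).
Qed.

Section N.
Variable n : nat.
Let HT := cong_eqI (RT n).

Lemma S_E (i : 'I_n) x y : eqA x y -> eqI (RT n) (slot i x) (slot i y).
Proof. exact: slot_eqA. Qed.

Lemma S_mul (i : 'I_n) (x y : FreeA k (Gen X)) : slot i (x * y) = slot i x * slot i y.
Proof. by rewrite !slotE extM. Qed.

Lemma S_0 (i : 'I_n) : slot i (0 : FreeA k (Gen X)) = 0.
Proof. by rewrite slotE ext0. Qed.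

Lemma S_comm (i j : 'I_n) (x y : FreeA k (Gen X)) : i != j ->
  commE (eqI (RT n)) (slot i x) (slot j y).
Proof. exact: slot_comm. Qed.
End N.

Lemma widen_slot m (i : 'I_m) (x : FreeA k (Gen X)) :
  widenT (slot i x) = slot (widen_ord (leqnSn m) i) x.
Proof.
rewrite /widenT /rename slotE ext_ext [RHS]slotE; apply: eq_ext => g.
by rewrite ext_gen.
Qed.

Lemma widen_eqT m (x y : FreeA k (TGen X m)) :
  eqI (RT m) x y -> eqI (RT m.+1) (widenT x) (widenT y).
Proof.
rewrite /eqI /widenT /rename -extB; apply: ideal_ext => r.
case=> [[i [r0 [Hr0 ->]]] | [i [j [g [g' [ij ->]]]]]].
  rewrite -[ext _ _]/(widenT (slot i r0)) widen_slot.
  by apply: ideal_in; left; exists (widen_ord (leqnSn m) i), r0.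
rewrite ext_commut; apply: ideal_in; right.
exists (widen_ord (leqnSn m) i), (widen_ord (leqnSn m) j), g, g'; split => //.
Qed.

Lemma widen_Fn_closed q :
  widenT (Fn_closed k circ q.+2) =
  \sum_(t : q.+1.-tuple X) \prod_(i < q.+2) slot (widen_ord (leqnSn q.+2) i) (slotG k circ t i).
Proof.
rewrite /Fn_closed /widenT /rename ext_sum; apply: eq_bigr => t _.
rewrite ext_prod; apply: eq_bigr => i _.
exact: widen_slot.
Qed.

Lemma claim2 p : eqI (RT p.+2) (Ffull_aux k sigma p) (Fn_closed k circ p.+2).
Proof.
elim: p => [|q IH].
  apply: (ceq (cong_eqI (RT 2))).
  exact: (base2_abs circ h wi (fun i : 'I_2 => slot i)).
have HT := cong_eqI (RT q.+3).
apply: (ctrans HT) (cmulr HT _ (widen_eqT IH)) _.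
rewrite widen_Fn_closed.
exact: (claim2_abs Hcirc_assoc Hcirc_id Hbrace Hsigma HA A_hh A_wih A_wiwi A_wie HT
  (m := q.+1) (S := fun i : 'I_q.+3 => slot i) (@S_E _) (@S_mul _) (@S_0 _) (@S_comm _)).
Qed.

End YB.

Section Dn.
Variables (k : fieldType) (X : finZmodType).
Local Notation h := (@hG k X).
Local Notation add := (@GRing.add X).

Lemma rename_slot m m' (f : 'I_m -> 'I_m') (i : 'I_m) (x : FreeA k (Gen X)) :
  rename (fun r : TGen X m => (f r.1, r.2)) (slot i x) = slot (f i) x.
Proof.
rewrite /rename slotE ext_ext [RHS]slotE; apply: eq_ext => g.
by rewrite ext_gen.
Qed.

Lemma slot_h n (i : 'I_n) a : slot i (h a) = gen (i, hgen a).
Proof. exact: slot_gen. Qed.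

Lemma Dslot0_S p (i : 'I_p) x :
  Dslot0 add (m := p) (slot (lift ord0 i) (h x)) = slot (lift ord0 (lift ord0 i)) (h x).
Proof. by rewrite /Dslot0 slot_h ext_gen /= slot_h. Qed.

Lemma Dslot0_0 p x :
  Dslot0 add (m := p) (slot ord0 (h x)) =
  \sum_(bc : X * X | bc.1 + bc.2 == x) slot ord0 (h bc.1) * slot (lift ord0 ord0) (h bc.2).
Proof.
rewrite /Dslot0 slot_h ext_gen /=.
rewrite /rename ext_sum; apply: eq_bigr => bc _.
rewrite extM; congr (_ * _).
  rewrite -[ext _ _]/(rename (fun q : TGen X 2 => (widen_ord (two_le_SS p) q.1, q.2)) (slot ord0 (h bc.1))).
  rewrite rename_slot.
  by have -> : widen_ord (two_le_SS p) ord0 = ord0 by apply: val_inj.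
rewrite -[ext _ _]/(rename (fun q : TGen X 2 => (widen_ord (two_le_SS p) q.1, q.2)) (slot ord_max (h bc.2))).
rewrite rename_slot.
by have -> : widen_ord (two_le_SS p) ord_max = lift ord0 ord0 by apply: val_inj.
Qed.

Lemma Dslot0_prod p (t : seq X) :
  Dslot0 add (m := p) (\prod_(i < p.+1) slot i (h (nth 0 t i))) =
  (\sum_(bc : X * X | bc.1 + bc.2 == nth 0 t 0) slot ord0 (h bc.1) * slot (lift ord0 ord0) (h bc.2)) *
  \prod_(i < p) slot (lift ord0 (lift ord0 i)) (h (nth 0 t (lift ord0 i))).
Proof.
rewrite [LHS]/Dslot0 ext_prod big_ord_recl.
congr (_ * _); first exact: Dslot0_0.
by apply: eq_bigr => i _; exact: Dslot0_S.
Qed.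

Lemma Dn_h p a : Dn_aux add p (h a) =
  \sum_(t : p.+1.-tuple X | \sum_(x <- t) x == a) \prod_(i < p.+1) slot i (h (nth 0 t i)).
Proof.
elim: p a => [|p IH] a.
  exact: (dn_base_abs (fun i x => slot i (h x)) a).
rewrite -[LHS]/(Dslot0 add (Dn_aux add p (h a))).
rewrite IH [LHS]/Dslot0 ext_sum.
transitivity (\sum_(t : p.+1.-tuple X | \sum_(x <- t) x == a)
  ((\sum_(bc : X * X | bc.1 + bc.2 == nth 0 t 0) slot ord0 (h bc.1) * slot (lift ord0 ord0) (h bc.2)) *
   \prod_(i < p) slot (lift ord0 (lift ord0 i)) (h (nth 0 t (lift ord0 i))))).
  by apply: eq_bigr => t _; exact: Dslot0_prod.
exact: (dn_step_abs (fun i x => slot i (h x)) a).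
Qed.

End Dn.

Section C1.
Variables (k : fieldType) (X : finZmodType).
Local Notation h := (@hG k X).
Local Notation wi := (@wiG k X).
Local Notation add := (@GRing.add X).

Lemma tensor_Fcal p :
  @tensor_id k X p.+2 (Dn add p.+1) (Fcal k X) =
  \sum_(t : p.+1.-tuple X) Kt h wi (fun i : 'I_p.+2 => slot i) t.
Proof.
rewrite /tensor_id /Fcal ext_sum.
transitivity (\sum_(a : X)
  (\sum_(t : p.+1.-tuple X | \sum_(x <- t) x == a)
     \prod_(i < p.+1) slot (widen_ord (leqnSn p.+1) i) (h (nth 0 t i))) *
  slot ord_max (wi a)); last first.
  exact: (fiber_tsum (fun t : p.+1.-tuple X =>
     \prod_(i < p.+1) slot (widen_ord (leqnSn p.+1) i) (h (nth 0 t i)))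
     (fun a => slot ord_max (wi a))).
apply: eq_bigr => a _; rewrite extM; congr (_ * _).
  rewrite slot_h ext_gen /=.
  rewrite -[gen (hgen a)]/(h a) Dn_h /rename ext_sum; apply: eq_bigr => t _.
  rewrite ext_prod; apply: eq_bigr => i _.
  rewrite -[ext _ _]/(rename (fun r : TGen X p.+1 => (widen_ord (leq_pred p.+2) r.1, r.2))
                         (slot i (h (nth 0 t i)))).
  rewrite rename_slot.
  by have -> : widen_ord (leq_pred p.+2) i = widen_ord (leqnSn p.+1) i by apply: val_inj.
rewrite (@slot_gen k X 2 ord_max (wigen a)) ext_gen (@slot_gen k X p.+2 ord_max (wigen a)) /=.
case: insubP => [i _ Hi|]; last by rewrite ltnSn.
by have -> : i = ord_max by apply: val_inj.
Qed.

End C1.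

Section Main.
Variables (k : fieldType) (X : finZmodType) (sigma tau circ : X -> X -> X) (e : X).
Hypothesis Hsigma_bij : forall a : X, bijective (sigma a).
Hypothesis Hcirc_assoc : associative circ.
Hypothesis Hcirc_id : forall a : X, circ e a = a /\ circ a e = a.
Hypothesis Hbrace : forall a b c : X, circ a (b + c) = circ a b - a + circ a c.
Hypothesis Hsigma : forall a b : X, sigma a b = - a + circ a b.
Hypothesis Hw : forall a b : X, eqYB sigma tau (wG k a * wG k b) (wG k (circ a b)).

Lemma claim1 p :
  eqTens sigma tau (Fbar k sigma p.+2) (@tensor_id k X p.+2 (Dn (@GRing.add X) p.+1) (Fcal k X)).
Proof.
rewrite tensor_Fcal.
exact: (claim1_abs Hsigma_bij Hcirc_assoc Hcirc_id Hbrace Hsigma (cong_eqI (@relA k X sigma tau))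
  (@hG k X) (A_wiwi Hw) (A_wie Hcirc_id Hw) (cong_eqI (@relT k X sigma tau p.+2))
  (m := p.+1) (S := fun i : 'I_p.+2 => slot i) (@S_E _ _ _ _ _)).
Qed.
End Main.

Unset Implicit Arguments.
Set Strict Implicit.

Theorem lemma2p18 (k : fieldType) (X : finZmodType) (sigma tau : X -> X -> X)
  (circ : X -> X -> X) (e : X)
  (Hsigma_bij : forall a : X, bijective (sigma a))
  (Hcirc_assoc : associative circ)
  (Hcirc_id : forall a : X, circ e a = a /\ circ a e = a)
  (Hcirc_inv : forall a : X, exists b : X, circ a b = e /\ circ b a = e)
  (Hbrace : forall a b c : X, circ a (b + c) = circ a b - a + circ a c)
  (Hsigma : forall a b : X, sigma a b = - a + circ a b)
  (Hsigtau : forall a b : X, sigma (sigma a b) (tau b a) = a)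
  (Hw : forall a b : X,
      eqYB sigma tau (wG k a * wG k b) (wG k (circ a b)))
  (n : nat) (Hn : (2 <= n)%N) :
  eqTens sigma tau (Fbar k sigma n)
    (@tensor_id k X n (Dn (@GRing.add X) n.-1) (Fcal k X)) /\
  eqTens sigma tau (Ffull k sigma n) (Fn_closed k circ n).
Proof.
case: n Hn => [|[|p]] // _; split.
  exact: (claim1 Hsigma_bij Hcirc_assoc Hcirc_id Hbrace Hsigma Hw p).
exact: (claim2 Hcirc_assoc Hcirc_id Hbrace Hsigma Hw p).
Qed.
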